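(* Let $q\geq 2$ be a prime power. In $\mathrm{PG}(2,q^2)$ there exists a semioval $\mathcal{S}\subset\mathcal{H}_q$ of size $k$ for every integer $k\in\{q^3-q^2+q\}\cup[q^3-q^2+q+2,\,q^3+1]$.
   Context: $\mathrm{PG}(2,q^2)$ is the Desarguesian projective plane over $\mathbb{F}_{q^2}$. $\mathcal{H}_q$ denotes the Hermitian curve, the set of points of $\mathrm{PG}(2,q^2)$ satisfying $X_2X_0^q+X_2^qX_0+X_1^{q+1}=0$ (it has $q^3+1$ points). A semioval is a non-empty pointset $\mathcal{S}$ such that for every $P\in\mathcal{S}$ there is a unique line $t_P$ with $\mathcal{S}\cap t_P=\{P\}$. *)

(* Defs.v *)
From HB Require Import structures.
From mathcomp Require Import all_boot all_order all_algebra.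
Set Implicit Arguments. Unset Strict Implicit. Unset Printing Implicit Defensive.
Import GRing.Theory.
Local Open Scope ring_scope.

(* Points (and lines) of PG(2,F) are represented by normalized homogeneous
   coordinate vectors: nonzero, with first nonzero coordinate equal to 1.
   Coordinates are indexed 0,1,2 as (X0,X1,X2). *)
Definition normalized (F : fieldType) (v : 'rV[F]_3) : bool :=
  [exists i : 'I_3, (v 0 i == 1) && [forall j : 'I_3, (j < i)%N ==> (v 0 j == 0)]].

Definition PGpoints (F : finFieldType) : {set 'rV[F]_3} :=
  [set v | normalized v].

Definition incident (F : fieldType) (v l : 'rV[F]_3) : bool :=
  \sum_(i < 3) v 0 i * l 0 i == 0.

Definition hermitian_curve (F : finFieldType) (q : nat) : {set 'rV[F]_3} :=
  [set v | normalized v &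
     v 0 2%:R * v 0 0%:R ^+ q + v 0 2%:R ^+ q * v 0 0%:R + v 0 1%:R ^+ q.+1 == 0].

Definition semioval (F : finFieldType) (S : {set 'rV[F]_3}) : Prop :=
  S \subset PGpoints F /\ S != set0 /\
  forall P, P \in S ->
    exists! l : 'rV[F]_3,
      [&& normalized l, incident P l & [forall Q in S, incident Q l ==> (Q == P)]].

(* Main.v *)
Require Import Defs.
From HB Require Import structures.
From mathcomp Require Import all_boot all_order all_algebra finfield.
From mathcomp Require Import zify ring.
Set Implicit Arguments. Unset Strict Implicit. Unset Printing Implicit Defensive.
Import GRing.Theory.
Local Open Scope ring_scope.

Section Lines.
Variable F : fieldType.
Definition row3 (a b c : F) : 'rV[F]_3 := \row_(i < 3) nth 0 [:: a; b; c] i.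
Lemma r0 a b c : row3 a b c 0 0%:R = a. Proof. by rewrite mxE. Qed.
Lemma r1 a b c : row3 a b c 0 1%:R = b. Proof. by rewrite mxE. Qed.
Lemma r2 a b c : row3 a b c 0 2%:R = c. Proof. by rewrite mxE. Qed.
Lemma row3E (v : 'rV[F]_3) : v = row3 (v 0 0%:R) (v 0 1%:R) (v 0 2%:R).
Proof.
apply/rowP => i; rewrite mxE; case: i => [[|[|[|i]]] Hi] //=.
- by congr (v _ _); apply: val_inj.
- by congr (v _ _); apply: val_inj.
- by congr (v _ _); apply: val_inj.
Qed.
Lemma row3_inj a b c d e f : row3 a b c = row3 d e f -> [/\ a = d, b = e & c = f].
Proof.
move=> h; split.
- by rewrite -(r0 a b c) h r0.
- by rewrite -(r1 a b c) h r1.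
- by rewrite -(r2 a b c) h r2.
Qed.

Definition o0 : 'I_3 := ord0.
Definition o1 : 'I_3 := inord 1.
Definition o2 : 'I_3 := inord 2.
Lemma normalized3 a b c : normalized (row3 a b c) =
  (a == 1) || (a == 0) && ((b == 1) || (b == 0) && (c == 1)).
Proof.
rewrite /normalized; apply/existsP/idP.
- case=> i /andP [h1 /forallP h2].
  have h20 := h2 o0; have h21 := h2 o1; rewrite !mxE /= in h20 h21.
  move: h1 h20 h21; rewrite mxE; case: i {h2} => [[|[|[|i]]] Hi] //=;
    rewrite /o1 ?inordK //= => h1 h20 h21.
  + by rewrite h1.
  + by rewrite h20 h1 orbT.
  + by rewrite h20 h21 h1 !orbT.
- case/orP => [h|/andP [ha /orP [h|/andP [hb hc]]]].
  + exists o0; rewrite mxE h /=; apply/forallP => j; by case: j.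
  + exists o1; rewrite /o1 mxE inordK //= h /=; apply/forallP => j; rewrite mxE.
    by case: j => [[|[|[|j]]] Hj] //=.
  + exists o2; rewrite /o2 mxE inordK //= hc /=; apply/forallP => j; rewrite mxE.
    by case: j => [[|[|[|j]]] Hj] //=.
Qed.

Lemma incident3 a b c d e f : incident (row3 a b c) (row3 d e f) = (a * d + b * e + c * f == 0).
Proof. by rewrite /incident !big_ord_recr big_ord0 /= !mxE /= add0r. Qed.

Lemma incident_scale v a b c k : k != 0 ->
  incident v (row3 (k * a) (k * b) (k * c)) = incident v (row3 a b c).
Proof.
move=> k0; rewrite (row3E v) !incident3.
have -> : v 0 0%:R * (k * a) + v 0 1%:R * (k * b) + v 0 2%:R * (k * c) =
  k * (v 0 0%:R * a + v 0 1%:R * b + v 0 2%:R * c) by ring.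
by rewrite mulf_eq0 (negbTE k0).
Qed.

Lemma normalized_scale a b c k : normalized (row3 a b c) ->
  normalized (row3 (k * a) (k * b) (k * c)) -> k = 1.
Proof.
rewrite !normalized3.
case/orP=>[/eqP->|/andP[/eqP-> /orP[/eqP->|/andP[/eqP-> /eqP->]]]];
  rewrite ?mulr1 ?mulr0 ?eqxx ?oner_eq0 /= ?orbF ?andbF.
all: rewrite ?(eq_sym 0 1) ?oner_eq0 /=.
- by case/orP => [/eqP //|/andP [/eqP k0]]; rewrite k0 !mul0r ?(eq_sym 0 1) ?oner_eq0 ?andbF.
- by case/orP => [/eqP //|/andP [/eqP k0]]; rewrite k0 !mul0r ?(eq_sym 0 1) ?oner_eq0 ?andbF.
- by move/eqP.
Qed.

Definition tline (a b : F) : 'rV[F]_3 :=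
  if a != 0 then row3 1 (b / a) a^-1 else if b != 0 then row3 0 1 b^-1 else row3 0 0 1.

Lemma tlineP a b : exists2 k, k != 0 & tline a b = row3 (k * a) (k * b) (k * 1).
Proof.
rewrite /tline; case: ifP => [a0|/negbFE/eqP a0].
  by exists a^-1; rewrite ?invr_eq0 // mulVf // mulr1 mulrC.
case: ifP => [b0|/negbFE/eqP b0].
  by exists b^-1; rewrite ?invr_eq0 // a0 mulVf // mulr1 mulr0.
by exists 1; rewrite ?oner_eq0 // a0 b0 !mulr0 mulr1.
Qed.

Lemma tline_norm a b : normalized (tline a b).
Proof.
rewrite /tline; case: ifP => _; first by rewrite normalized3 eqxx.
by case: ifP => _; rewrite normalized3 !eqxx ?orbT.
Qed.

End Lines.

Lemma subset_card (T : finType) (A : {set T}) n : (n <= #|A|)%N ->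
  exists2 B : {set T}, B \subset A & #|B| = n.
Proof.
move=> hn; exists [set x in take n (enum A)].
  by apply/subsetP => x; rewrite inE => /mem_take; rewrite mem_enum.
rewrite cardsE; have /card_uniqP -> := take_uniq n (enum_uniq (mem A)).
by rewrite size_takel // -cardE.
Qed.

Section Herm.
Variable F : finFieldType.
Variable q : nat.
Hypothesis hq : (2 <= q)%N.
Hypothesis hnat : [pchar F].-nat q.
Hypothesis hcard : #|F| = (q ^ 2)%N.

Definition cj (x : F) := x ^+ q.

Lemma cjD x y : cj (x + y) = cj x + cj y.
Proof. exact: exprDn_pchar. Qed.
Lemma cjN x : cj (- x) = - cj x.
Proof. exact: exprNn_pchar. Qed.
Lemma cjB x y : cj (x - y) = cj x - cj y.
Proof. by rewrite cjD cjN. Qed.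
Lemma cjM x y : cj (x * y) = cj x * cj y.
Proof. exact: exprMn. Qed.
Lemma cj1 : cj 1 = 1. Proof. exact: expr1n. Qed.
Lemma cj0 : cj 0 = 0. Proof. by rewrite /cj expr0n; case: q hq. Qed.
Lemma cjK x : cj (cj x) = x.
Proof. by rewrite /cj -exprM mulnn -hcard expf_card. Qed.

Lemma q_gt0 : (0 < q)%N. Proof. exact: leq_trans hq. Qed.

Definition rset (a : F) := [set x : F | x ^+ q == a * x].
Lemma roots_le (a : F) : (#|rset a| <= q)%N.
Proof.
pose p : {poly F} := 'X^q - a *: 'X.
have szp : size p = q.+1.
  rewrite /p size_polyDl ?size_polyXn // size_polyN.
  by apply: leq_ltn_trans (size_scale_leq _ _) _; rewrite size_polyX ltnS.
have p0 : p != 0 by rewrite -size_poly_eq0 szp.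
have := max_poly_roots p0 (_ : all (root p) (enum (rset a))) (enum_uniq _).
rewrite szp ltnS -cardE; apply.
apply/allP => x; rewrite mem_enum inE /root /p !hornerE subr_eq0.
by rewrite mulrC.
Qed.

Definition Tr (w : F) := w + cj w.
Definition Fq := [set y : F | cj y == y].
Definition Ker := [set k : F | Tr k == 0].

Lemma TrD x y : Tr (x + y) = Tr x + Tr y.
Proof. by rewrite /Tr cjD addrACA. Qed.
Lemma TrB x y : Tr (x - y) = Tr x - Tr y.
Proof. by rewrite /Tr cjB addrACA opprD. Qed.

Lemma Tr_Fq w : Tr w \in Fq.
Proof. by rewrite inE /Tr cjD cjK addrC. Qed.

Lemma card_Fq : (#|Fq| <= q)%N.
Proof.
apply: leq_trans (roots_le 1); apply: subset_leq_card; apply/subsetP => x.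
by rewrite !inE mul1r.
Qed.

Lemma card_Ker_le : (#|Ker| <= q)%N.
Proof.
apply: leq_trans (roots_le (-1)); apply: subset_leq_card; apply/subsetP => x.
by rewrite !inE mulN1r /Tr addrC addr_eq0.
Qed.

Definition rep (y : F) := odflt 0 [pick w | Tr w == y].

Lemma repP w : Tr (rep (Tr w)) = Tr w.
Proof.
rewrite /rep; case: pickP => [v /eqP -> //|/(_ w)]; by rewrite eqxx.
Qed.

Lemma card_Im_Ker : (#|F| <= #|Tr @: setT| * #|Ker|)%N.
Proof.
pose g w := (Tr w, w - rep (Tr w)).
have ginj : injective g.
  move=> w w' [e1 e2]; by move: e2; rewrite e1 => /addIr.
rewrite -cardsX -cardsT -(card_imset _ ginj); apply: subset_leq_card.
apply/subsetP => _ /imsetP [w _ ->]; rewrite !inE /= imset_f //=.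
by rewrite TrB repP subrr.
Qed.

Lemma card_Ker : #|Ker| = q.
Proof.
have h1 := card_Im_Ker; have h2 := card_Ker_le.
have h3 : (#|Tr @: setT| <= q)%N.
  apply: leq_trans card_Fq; apply: subset_leq_card; apply/subsetP => _ /imsetP [w _ ->].
  exact: Tr_Fq.
rewrite hcard in h1; apply/eqP; rewrite eqn_leq h2 /=.
have := leq_trans h1 (leq_mul h3 (leqnn #|Ker|)).
by rewrite expnS expn1 leq_pmul2l // q_gt0.
Qed.

Lemma Tr_surj y : y \in Fq -> exists w, Tr w = y.
Proof.
move=> yF.
have sub : Tr @: setT \subset Fq.
  apply/subsetP => _ /imsetP [w _ ->]; exact: Tr_Fq.
have h1 := card_Im_Ker; rewrite hcard card_Ker in h1.
have : Tr @: setT == Fq.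
  rewrite eqEcard sub /=; apply: leq_trans card_Fq _.
  by move: h1; rewrite expnS expn1 mulnC leq_pmul2l // q_gt0.
move/eqP => e; move: yF; rewrite -e => /imsetP [w _ ->]; by exists w.
Qed.

Definition Nm (u : F) := u * cj u.
Definition U1 := [set u : F | Nm u == 1].

Lemma NmM x y : Nm (x * y) = Nm x * Nm y.
Proof. by rewrite /Nm cjM mulrACA. Qed.

Lemma NmV x : Nm x^-1 = (Nm x)^-1.
Proof. by rewrite /Nm /cj exprVn invfM mulrC. Qed.

Lemma Nm_Fq u : Nm u \in Fq.
Proof. by rewrite inE /Nm cjM cjK mulrC. Qed.

Lemma Nm_eq0 u : (Nm u == 0) = (u == 0).
Proof. by rewrite /Nm /cj -exprS expf_eq0. Qed.

Lemma card_U1 : (q.+1 <= #|U1|)%N.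
Proof.
pose rp (y : F) := odflt 1 [pick w | Nm w == y].
have rpP : forall u, Nm (rp (Nm u)) = Nm u.
  move=> u; rewrite /rp; case: pickP => [v /eqP -> //|/(_ u)]; by rewrite eqxx.
pose g u := (Nm u, u / rp (Nm u)).
have ginj : {in [set~ 0] &, injective g}.
  move=> u u' hu _ e; have /= e1 := congr1 fst e; have /= := congr1 snd e.
  rewrite e1; apply: mulIf.
  by rewrite invr_eq0 -Nm_eq0 rpP -e1 Nm_eq0; move: hu; rewrite !inE.
have h1 : (#|[set~ (0%R : F)]| <= #|Fq :\ (0%R : F)| * #|U1|)%N.
  rewrite -cardsX -(card_in_imset ginj); apply: subset_leq_card.
  apply/subsetP => _ /imsetP [u hu ->]; move: hu; rewrite !inE /= => hu.
  rewrite Nm_eq0 hu /=; move: (Nm_Fq u); rewrite inE => -> /=.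
  by rewrite NmM NmV rpP divff // Nm_eq0.
rewrite cardsC1 hcard in h1.
have h2 := cardsD1 (0%R : F) Fq.
have h0 : (0%R : F) \in Fq by rewrite inE cj0.
rewrite h0 in h2; have h3 := card_Fq.
move: h1 h2 h3; set a := #|Fq :\ 0|; set b := #|Fq|; set c := #|U1|.
have := hq; nia.
Qed.
Local Notation H := (hermitian_curve F q).
Definition Pinf : 'rV[F]_3 := row3 0 0 1.
Definition Aff (x z : F) : 'rV[F]_3 := row3 1 x z.

Lemma H_Pinf : Pinf \in H.
Proof.
rewrite inE normalized3 !eqxx /= r0 r1 r2 expr0n.
case: q hq => // n _; rewrite !mulr0 !expr0n /= !addr0 eqxx orbT; by rewrite orbT.
Qed.

Lemma H_Aff x z : (Aff x z \in H) = (z + cj z + Nm x == 0).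
Proof. by rewrite inE normalized3 eqxx /= r0 r1 r2 expr1n !mulr1 /Nm /cj exprS. Qed.

Lemma H_cases v : v \in H -> v = Pinf \/ exists x z, v = Aff x z /\ z + cj z + Nm x = 0.
Proof.
rewrite inE (row3E v); move: (v 0 0%:R) (v 0 1%:R) (v 0 2%:R) => a b c.
rewrite normalized3 r0 r1 r2.
case/andP => /orP [/eqP ->|/andP [/eqP -> /orP [/eqP ->|/andP [/eqP -> /eqP ->]]]] he.
- right; exists b, c; split => //; apply/eqP.
  by move: he; rewrite expr1n !mulr1 /Nm /cj exprS.
- move: he; rewrite expr1n expr0n; case: q hq => // n _.
  by rewrite !mulr0 !add0r oner_eq0.
- by left.
Qed.

Lemma Aff_Pinf x z : Aff x z != Pinf.
Proof. by apply/eqP => /row3_inj [/eqP]; rewrite oner_eq0. Qed.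

Lemma Aff_inj x z y w : Aff x z = Aff y w -> x = y /\ z = w.
Proof. by case/row3_inj. Qed.

Lemma H_sub_PG : H \subset PGpoints F.
Proof. by apply/subsetP => v; rewrite !inE => /andP []. Qed.

Lemma cj_eq0 x : (cj x == 0) = (x == 0).
Proof. by rewrite /cj expf_eq0 q_gt0. Qed.

Lemma semioval_gen (S : {set 'rV[F]_3}) (C : {set F}) :
  S \subset H -> S != set0 -> (#|C| < q)%N ->
  (forall x z, z + cj z + Nm x = 0 -> x \notin C -> Aff x z \in S) ->
  (forall x z, Aff x z \in S -> Pinf \in S \/ exists2 w, w != z & Aff x w \in S) ->
  (Pinf \in S -> forall c, exists w, Aff c w \in S) ->
  semioval S.
Proof.
move=> sSH nS hC hN hV hVi; split; first exact: subset_trans sSH H_sub_PG.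
split => // P PS.
have PH := subsetP sSH P PS.
case: (H_cases PH) => [eP|[x [z [eP hz]]]]; subst P.
- exists (row3 1 0 0); split.
  + apply/and3P; split.
    * by rewrite normalized3 eqxx.
    * by rewrite /Pinf incident3 !mul0r mulr0 !addr0.
    * apply/forallP => Q; apply/implyP => QS; apply/implyP => hinc.
      case: (H_cases (subsetP sSH Q QS)) => [->//|[y [w [eQ _]]]].
      by move: hinc; rewrite eQ /Aff incident3 !mulr0 mulr1 !addr0 oner_eq0.
  + move=> l /and3P [ln li /forallP lS].
    move: ln li lS; rewrite (row3E l); move: (l 0 0%:R) (l 0 1%:R) (l 0 2%:R) => a b c.
    rewrite /Pinf incident3 !mul0r !add0r mul1r => ln /eqP c0 lS; subst c.
    have [b0|b0] := eqVneq b 0.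
    * subst b; move: ln; rewrite normalized3 => /orP [/eqP -> //|].
      by rewrite eqxx (eq_sym 0) oner_eq0 /= andbF.
    * exfalso; have [w hw] := hVi PS (- a / b).
      have := lS (Aff (- a / b) w); rewrite hw /Aff incident3 mul1r mulr0 addr0 divfK //.
      rewrite addrN eqxx /= => /eqP e.
      by move: (Aff_Pinf (- a / b) w); rewrite /Aff e eqxx.
- have [k k0 ek] := tlineP (cj z) (cj x).
  have hz' := hz; rewrite /Nm in hz'.
  exists (tline (cj z) (cj x)); split.
  + apply/and3P; split; first exact: tline_norm.
    * rewrite ek incident_scale // /Aff incident3 mul1r mulr1.
      by apply/eqP; rewrite -hz'; ring.
    * apply/forallP => Q; apply/implyP => QS; apply/implyP; rewrite ek incident_scale //.
      case: (H_cases (subsetP sSH Q QS)) => [->|[y [w [-> hw]]]].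
        by rewrite /Pinf incident3 !mul0r !add0r mulr1 oner_eq0.
      rewrite /Aff incident3 mul1r mulr1 => /eqP h1.
      have h2 : cj w + z + cj y * x = 0.
        by have := congr1 cj h1; rewrite !cjD cjM !cjK cj0 => <-; ring.
      have hw' := hw; rewrite /Nm in hw'.
      have hd : (y - x) * (cj y - cj x) = 0.
        transitivity ((w + cj w + y * cj y) - (cj z + y * cj x + w) - (cj w + z + cj y * x)
           + (z + cj z + x * cj x)); first by ring.
        by rewrite hw' h1 h2 hz' !subr0 addr0.
      have exy : y = x.
        by move: hd; rewrite -cjB => /eqP; rewrite mulf_eq0 cj_eq0 orbb subr_eq0 => /eqP.
      subst y.
      have ew : w = z.
        apply/eqP; rewrite -subr_eq0.
        have -> : w - z = (cj z + x * cj x + w) - (z + cj z + x * cj x) by ring.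
        by rewrite h1 hz' subrr.
      by rewrite ew.
  + move=> l /and3P [ln li /forallP lS].
    move: ln li lS; rewrite (row3E l); move: (l 0 0%:R) (l 0 1%:R) (l 0 2%:R) => a b c.
    rewrite /Aff incident3 mul1r => ln /eqP hP lS.
    have lSi : forall Q, Q \in S -> incident Q (row3 a b c) -> Q = row3 1 x z.
      by move=> Q QS hi; apply/eqP; move: (lS Q); rewrite QS hi.
    have [c0|c0] := eqVneq c 0.
    * subst c; exfalso; rewrite mulr0 addr0 in hP.
      case: (hV x z PS) => [PiS|[w wz wS]].
        have := lSi _ PiS; rewrite /Pinf incident3 !mul0r !add0r mulr0 eqxx => /(_ isT) e.
        by move: (Aff_Pinf x z); rewrite /Aff -e eqxx.
      have := lSi _ wS; rewrite /Aff incident3 mul1r mulr0 addr0 hP eqxx.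
      by move=> /(_ isT) /row3_inj [_ _ e]; rewrite e eqxx in wz.
    * set be := b / c; set bb := cj x - be.
      have [bb0|bb0] := eqVneq bb 0.
      - have eb : b = c * cj x.
          have : cj x = b / c by apply/eqP; rewrite -subr_eq0 -/be -/bb bb0.
          by move=> ->; rewrite mulrC divfK.
        have ea : a = c * cj z.
          apply/eqP; rewrite -subr_eq0.
          have -> : a - c * cj z = (a + x * b + z * c) - c * (z + cj z + x * cj x)
            by rewrite eb; ring.
          by rewrite hP hz' mulr0 subr0.
        rewrite ea eb in ln.
        have ck : c / k = 1.
          apply: (@normalized_scale _ (k * cj z) (k * cj x) (k * 1)); first by rewrite -ek tline_norm.
          by rewrite !mulrA divfK // mulr1.
        have ck' : c = k by rewrite -[c](divfK k0) ck mul1r.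
        by rewrite ek ea eb ck' mulr1.
      - exfalso.
        have hU : (q <= #|U1 :\ 1%R|)%N.
          have := card_U1; rewrite (cardsD1 1 U1) inE /Nm cj1 mulr1 eqxx.
          by rewrite add1n ltnS.
        have cbb0 : cj bb != 0 by rewrite cj_eq0.
        pose f u := x + cj bb * (u - 1).
        have finj : injective f.
          by move=> u v /addrI /(mulfI cbb0) /addIr.
        have : ~~ (f @: (U1 :\ 1) \subset C).
          apply/negP => /subset_leq_card; rewrite card_imset // => h.
          by have := leq_trans hU h; rewrite leqNgt hC.
        case/subsetPn => _ /imsetP [u hu ->] fC.
        move: hu; rewrite !inE => /andP [u1 /eqP hu]; rewrite /Nm in hu.
        set t := cj bb * (u - 1).
        have ct : cj t = bb * (cj u - 1) by rewrite cjM cjK cjB cj1.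
        have cbb : cj bb = x - cj be by rewrite /bb cjB cjK.
        have hQ : (z - be * t) + cj (z - be * t) + Nm (x + t) = 0.
          rewrite cjB cjM /Nm cjD ct /t cbb /bb.
          transitivity ((z + cj z + x * cj x) + (cj x - be) * (x - cj be) * (u * cj u - 1));
            first by ring.
          by rewrite hz' hu subrr mulr0 addr0.
        have QS := hN _ _ hQ fC.
        have := lSi _ QS; rewrite /Aff incident3 mul1r.
        have -> : a + (x + t) * b + (z - be * t) * c = (a + x * b + z * c) + t * (b - be * c)
          by ring.
        rewrite hP add0r /be divfK // subrr mulr0 eqxx => /(_ isT) /row3_inj [_ e _].
        move: e => /eqP; rewrite addrC -subr_eq0 addrK /t mulf_eq0 (negbTE cbb0) /=.
        by rewrite subr_eq0 (negbTE u1).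
Qed.

Lemma negNm_Fq c : - Nm c \in Fq.
Proof. by move: (Nm_Fq c); rewrite !inE cjN => /eqP ->. Qed.

Definition w0 (c : F) := rep (- Nm c).

Lemma w0P c : Tr (w0 c) = - Nm c.
Proof. have [w hw] := Tr_surj (negNm_Fq c); by rewrite /w0 -hw repP. Qed.

Definition phi (p : F * F) := Aff p.1 (w0 p.1 + p.2).

Lemma phi_inj : injective phi.
Proof.
move=> [c k] [c' k'] /Aff_inj /= [ec]; subst c' => /addrI ->; by [].
Qed.

Lemma phi_H c k : k \in Ker -> phi (c, k) \in H.
Proof.
rewrite inE => /eqP hk; rewrite H_Aff /=.
have -> : w0 c + k + cj (w0 c + k) + Nm c = Tr (w0 c) + Tr k + Nm c by rewrite /Tr cjD; ring.
by rewrite hk w0P addr0 addNr.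
Qed.

Lemma H_phi x z : z + cj z + Nm x = 0 -> z - w0 x \in Ker /\ Aff x z = phi (x, z - w0 x).
Proof.
move=> hz; split; last by rewrite /phi /= addrC subrK.
rewrite inE TrB w0P /Tr; apply/eqP.
by rewrite opprK.
Qed.

Lemma phi_Pinf p : phi p != Pinf.
Proof. exact: Aff_Pinf. Qed.

Lemma Ker0 : (0 : F) \in Ker.
Proof. by rewrite inE /Tr cj0 addr0. Qed.

Lemma KerD k k' : k \in Ker -> k' \in Ker -> k + k' \in Ker.
Proof. by rewrite !inE TrD => /eqP -> /eqP ->; rewrite addr0. Qed.

Lemma H_decomp : H = Pinf |: (phi @: setX setT Ker).
Proof.
apply/setP => v; apply/idP/idP.
- move/H_cases => [->|[x [z [-> hz]]]]; first by rewrite !inE eqxx.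
  have [hk ->] := H_phi hz; rewrite in_setU1; apply/orP; right; apply: imset_f; by rewrite in_setX in_setT hk.
- rewrite in_setU1; case/orP => [/eqP ->|/imsetP [[c k] ]]; first exact: H_Pinf.
  by rewrite in_setX => /andP [_ hk] ->; apply: phi_H.
Qed.

Lemma card_H : #|H| = (q ^ 3).+1.
Proof.
rewrite H_decomp cardsU1 card_in_imset; last by move=> ? ? _ _; apply: phi_inj.
rewrite cardsX cardsT hcard card_Ker.
have -> : Pinf \notin phi @: setX setT Ker.
  by apply/imsetP => -[p _ e]; move: (phi_Pinf p); rewrite -e eqxx.
by rewrite add1n -expnSr.
Qed.

Lemma card_Ker0 : #|Ker :\ 0| = q.-1.
Proof. by have := cardsD1 0 Ker; rewrite Ker0 card_Ker => ->. Qed.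

Lemma Aff_w0_H c : Aff c (w0 c) \in H.
Proof. by rewrite H_Aff -/(Tr (w0 c)) w0P addNr. Qed.

Lemma constr1 r : (r <= q.-1 * q.-1)%N ->
  exists S, [/\ semioval S, S \subset H & #|S| = ((q ^ 3).+1 - r)%N].
Proof.
move=> hr.
have [C _ hCc] : exists2 C : {set F}, C \subset [set: F] & #|C| = q.-1.
  by apply: (@subset_card _ [set: F] q.-1); rewrite cardsT hcard; nia.
pose D := phi @: setX C (Ker :\ 0).
have cD : #|D| = (q.-1 * q.-1)%N.
  rewrite card_in_imset; last by move=> ? ? _ _; apply: phi_inj.
  by rewrite cardsX hCc card_Ker0.
have [R RD hRc] : exists2 R : {set 'rV[F]_3}, R \subset D & #|R| = r.
  by apply: (@subset_card _ D r); rewrite cD.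
have RH : R \subset H.
  apply/subsetP => v /(subsetP RD) /imsetP [[c k]]; rewrite in_setX => /andP [_].
  by rewrite in_setD1 => /andP [_ hk] ->; apply: phi_H.
have hPinf : Pinf \in H :\: R.
  rewrite in_setD H_Pinf andbT; apply/negP => /(subsetP RD) /imsetP [p _ e].
  by move: (phi_Pinf p); rewrite -e eqxx.
exists (H :\: R); split.
- apply: (@semioval_gen _ C).
  + exact: subsetDl.
  + by apply/set0Pn; exists Pinf.
  + by rewrite hCc; case: q hq.
  + move=> x z hz xC; rewrite in_setD H_Aff hz eqxx andbT.
    apply/negP => /(subsetP RD) /imsetP [[c k]]; rewrite in_setX => /andP [cC _] /Aff_inj [e _].
    by move: xC; rewrite e cC.
  + by move=> x z _; left.
  + move=> _ c; exists (w0 c); rewrite in_setD Aff_w0_H andbT.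
    apply/negP => /(subsetP RD) /imsetP [[c' k]]; rewrite in_setX => /andP [_ hk] /Aff_inj /= [e1 e2].
    subst c'; have k0 : k = 0 by apply: (addrI (w0 c)); rewrite addr0 -e2.
    by move: hk; rewrite k0 !inE eqxx.
- exact: subsetDl.
- by rewrite cardsD (setIidPr RH) card_H hRc.
Qed.

Lemma constr2 m : (1 <= m <= q.-2)%N \/ m = q ->
  exists S, [/\ semioval S, S \subset H & #|S| = ((q ^ 3).+1 - (1 + q.-2 * q + m))%N].
Proof.
move=> hm.
have [C _ hCc] : exists2 C : {set F}, C \subset [set: F] & #|C| = q.-1.
  by apply: (@subset_card _ [set: F] q.-1); rewrite cardsT hcard; nia.
have : C != set0 by rewrite -card_gt0 hCc; case: q hq => [|[|n]].
case/set0Pn => cs csC.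
pose C1 := C :\ cs.
have cC1 : #|C1| = q.-2 by have := cardsD1 cs C; rewrite csC hCc add1n => /eqP; rewrite -subn1 => /eqP; case: q hq => [|[|n]] //= _; rewrite subn1 => /eqP; rewrite eqSS => /eqP.
have : Ker :\ 0 != set0 by rewrite -card_gt0 card_Ker0; case: q hq => [|[|n]].
case/set0Pn => k1; rewrite in_setD1 => /andP [k10 k1K].
have [M [MK hMc hM]] : exists M : {set F},
    [/\ M \subset Ker, #|M| = m & M = Ker \/ (0 \notin M /\ k1 \notin M)].
  case: hm => [hm|->]; last by exists Ker; split; [exact: subxx | exact: card_Ker | left].
  have [M hM hMc] : exists2 M : {set F}, M \subset Ker :\: [set 0; k1] & #|M| = m.
    apply: (@subset_card _ (Ker :\: [set 0; k1]) m).
    rewrite cardsD (setIidPr _); last first.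
      by apply/subsetP => y; rewrite in_set2 => /orP [] /eqP ->; [exact: Ker0 | exact: k1K].
    rewrite cards2 eq_sym k10 card_Ker; lia.
  exists M; split => //.
  - by apply: subset_trans hM (subsetDl _ _).
  - right; split; apply/negP => /(subsetP hM); rewrite !inE eqxx ?orbT //.
pose X := setX C1 Ker :|: setX [set cs] M.
pose R := Pinf |: phi @: X.
have XK : forall c k, (c, k) \in X -> k \in Ker.
  move=> c k; rewrite in_setU !in_setX => /orP [/andP [_ //]|/andP [_ /(subsetP MK) //]].
have XC : forall c k, (c, k) \in X -> c \in C.
  move=> c k; rewrite in_setU !in_setX in_set1 => /orP [/andP [] |/andP [/eqP -> _ //]].
  by rewrite in_setD1 => /andP [].
have memR : forall p, phi p \in R -> p \in X.
  move=> p; rewrite in_setU1 (negbTE (phi_Pinf p)) /= => /imsetP [p' p'X /phi_inj ->] //.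
have RH : R \subset H.
  apply/subsetP => v; rewrite in_setU1 => /orP [/eqP ->|/imsetP [[c k] hX ->]].
    exact: H_Pinf.
  by apply: phi_H; apply: XK hX.
have AffR : forall x z, z + cj z + Nm x = 0 -> Aff x z \in R -> x \in C.
  move=> x z hz; have [_ ->] := H_phi hz; by move/memR/XC.
have notR : forall x z, z + cj z + Nm x = 0 -> x \notin C -> Aff x z \in H :\: R.
  move=> x z hz xC; rewrite in_setD H_Aff hz eqxx andbT.
  by apply/negP => /(AffR _ _ hz); apply/negP.
exists (H :\: R); split.
- apply: (@semioval_gen _ C).
  + exact: subsetDl.
  + have : ~~ ([set: F] \subset C).
      apply/negP => /subset_leq_card; rewrite cardsT hcard hCc; nia.
    case/subsetPn => c _ cC; apply/set0Pn; exists (Aff c (w0 c)).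
    apply: notR cC; by move: (Aff_w0_H c); rewrite H_Aff => /eqP.
  + by rewrite hCc; case: q hq.
  + move=> x z hz xC; exact: notR.
  + move=> x z; rewrite in_setD => /andP [xR xH]; right.
    have hz : z + cj z + Nm x = 0 by apply/eqP; rewrite -H_Aff.
    have [hk ex] := H_phi hz; set k := z - w0 x in hk ex.
    have phiR : forall p, p \in X -> phi p \in R.
      by move=> p pX; rewrite in_setU1 imset_f ?orbT.
    have XP : forall c k'', ((c, k'') \in X) = ((c \in C1) && (k'' \in Ker)) || ((c == cs) && (k'' \in M)).
      by move=> c k''; rewrite in_setU !in_setX in_set1.
    have kX : (x, k) \notin X.
      by apply/negP => /phiR; rewrite -ex; apply/negP.
    have ez : z = w0 x + k by rewrite /k addrC subrK.
    have notX : forall k'', k'' \in Ker -> (x, k'') \notin X -> Aff x (w0 x + k'') \in H :\: R.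
      move=> k'' hk'' nX; rewrite in_setD; apply/andP; split; last exact: (phi_H x hk'').
      by apply/negP => /(memR (x, k'')); apply/negP.
    have [xcs|xcs] := eqVneq x cs.
    * subst x; move: kX; rewrite XP eqxx /= hk andbT => /norP [_ kM].
      case: hM => [eM|[n0 nk1]]; first by move: kM; rewrite eM hk.
      exists (w0 cs + (if k == 0 then k1 else 0)).
        rewrite ez; apply/negP => /eqP /addrI; case: eqP => [->|/eqP kn0 e].
          by apply/eqP.
        by move: kn0; rewrite -e eqxx.
      apply: notX; first by case: (k == 0); [exact: k1K | exact: Ker0].
      rewrite XP eqxx /= in_setD1 eqxx /=; by case: (k == 0).
    * exists (z + k1).
        by rewrite -{2}[z]addr0 (inj_eq (addrI z)).
      have xC1 : x \notin C1.
        by apply/negP => xC1; move: kX; rewrite XP xC1 hk.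
      rewrite ez -addrA; apply: notX; first exact: KerD.
      by rewrite XP (negbTE xC1) (negbTE xcs).
  + by rewrite in_setD in_setU1 eqxx.
- exact: subsetDl.
- rewrite cardsD (setIidPr RH) card_H cardsU1.
  have -> : Pinf \notin phi @: X.
    by apply/imsetP => -[p _ e]; move: (phi_Pinf p); rewrite -e eqxx.
  rewrite card_in_imset; last by move=> ? ? _ _; apply: phi_inj.
  rewrite cardsU !cardsX cC1 card_Ker cards1 hMc.
  have -> : setX C1 Ker :&: setX [set cs] M = set0.
    apply/setP => -[c k]; rewrite !inE /=.
    by case: (eqVneq c cs) => [->|]; rewrite ?eqxx ?andbF.
  by rewrite cards0 subn0 mul1n.
Qed.

End Herm.

Local Close Scope ring_scope.

Theorem mainTheorem3 (q : nat) (F : finFieldType) :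
  (2 <= q)%N ->
  (exists p n : nat, [/\ prime p, (0 < n)%N & q = p ^ n]) ->
  #|F| = (q ^ 2)%N ->
  forall k : nat,
    (k = q ^ 3 - q ^ 2 + q \/ (q ^ 3 - q ^ 2 + q + 2 <= k <= q ^ 3 + 1))%N ->
    exists S : {set 'rV[F]_3},
      [/\ semioval S, S \subset @hermitian_curve F q & #|S| = k].
Proof.
move=> hq [p [n [pp n0 eq]]] hcard k hk.
have hchar : p \in [pchar F]%R.
  by apply: (@card_finPcharP F p (n * 2)) => //; rewrite hcard eq expnM.
have hnat : ([pchar F]%R).-nat q.
  by rewrite (eq_pnat _ (pcharf_eq hchar)) eq pnatX pnat_id.
have e2 : (q ^ 2 = q * q)%N by rewrite expnS expn1.
have e3 : (q ^ 3 = q * (q * q))%N by rewrite !expnS expn0 muln1.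
have e4 : (q.-1 * q.-1 = q * q - 2 * q + 1)%N by nia.
have e5 : (q.-2 * q = q * q - 2 * q)%N by nia.
have e6 : (q * q <= q * (q * q))%N by nia.
have e7 : (2 * q <= q * q)%N by nia.
rewrite e2 e3 in hk.
case: (leqP ((q ^ 3).+1 - k) (q.-1 * q.-1)) => hr.
- have [S [h1 h2 h3]] := constr1 hq hnat hcard hr.
  exists S; split => //; rewrite h3.
  move: hk hr e4 e6 e7; rewrite e3; set Q2 := (q * q)%N; set Q3 := (q * Q2)%N; lia.
- have hm : (1 <= (q ^ 3).+1 - k - 1 - q.-2 * q <= q.-2)%N \/ ((q ^ 3).+1 - k - 1 - q.-2 * q)%N = q.
    move: hk hr e4 e5 e6 e7; rewrite e3; set Q2 := (q * q)%N; set Q3 := (q * Q2)%N; lia.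
  have [S [h1 h2 h3]] := constr2 hq hnat hcard hm.
  exists S; split => //; rewrite h3.
  move: hk hr e4 e5 e6 e7; rewrite e3; set Q2 := (q * q)%N; set Q3 := (q * Q2)%N; lia.
Qed.
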